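(* Let $P$ and $Q$ be arbitrary distributions on $\mathcal{X}$ with densities, let $\varepsilon>0$, and let $\tau=\max\{\int_{\mathcal{X}}\max\{P(x)-e^{\varepsilon}Q(x),0\}\mathrm{d}x,\ \int_{\mathcal{X}}\max\{Q(x)-e^{\varepsilon}P(x),0\}\mathrm{d}x\}$. Assume $\tau=\int_{\mathcal{X}}\max\{P(x)-e^{\varepsilon}Q(x),0\}\mathrm{d}x$. Then there exists $\varepsilon'\in[0,\varepsilon]$ such that $\tau=\int_{\mathcal{X}}\max\{Q(x)-e^{\varepsilon'}P(x),0\}\mathrm{d}x$. *)

(* Defs.v *)
From mathcomp Require Import all_boot all_order all_algebra.
From mathcomp Require Import all_classical all_reals all_analysis.
Set Implicit Arguments. Unset Strict Implicit. Unset Printing Implicit Defensive.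
Import Order.TTheory GRing.Theory Num.Theory.
Local Open Scope ring_scope.
Local Open Scope ereal_scope.

Definition is_density d (X : measurableType d) (R : realType)
  (mu : {measure set X -> \bar R}) (p : X -> R) : Prop :=
  [/\ measurable_fun setT p, (forall x, (0 <= p x)%R) &
      \int[mu]_x (p x)%:E = 1].

Definition hockey d (X : measurableType d) (R : realType)
  (mu : {measure set X -> \bar R}) (p q : X -> R) (eps : R) : \bar R :=
  \int[mu]_x (Num.max (p x - expR eps * q x) 0)%R%:E.

(* Main.v *)
Require Import Defs.
From mathcomp Require Import all_boot all_order all_algebra.
From mathcomp Require Import all_classical all_reals all_analysis measurable_realfun.
From mathcomp Require Import ring lra.
Import Order.TTheory GRing.Theory Num.Theory.
Import numFieldNormedType.Exports.
Local Open Scope classical_set_scope.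
Local Open Scope ring_scope.

Lemma mhock d (X : measurableType d) (R : realType) (P Q : X -> R) (c : R) :
  measurable_fun setT P -> measurable_fun setT Q ->
  measurable_fun setT (fun x => (Num.max (Q x - c * P x) 0)%:E).
Proof.
move=> mP mQ; apply/measurable_EFinP.
apply: (@measurable_maxr _ _ _ _ (fun x => Q x - c * P x) (cst 0)); last exact: measurable_cst.
apply: measurable_funB => //; apply: measurable_funM => //; exact: measurable_cst.
Qed.

Lemma hock_ge0 d (X : measurableType d) (R : realType)
  (mu : {measure set X -> \bar R}) (P Q : X -> R) (c : R) :
  (0 <= hockey mu Q P c)%E.
Proof. by apply: integral_ge0 => x _; rewrite lee_fin le_max lexx orbT. Qed.

Lemma hock_fin d (X : measurableType d) (R : realType)
  (mu : {measure set X -> \bar R}) (P Q : X -> R) (c : R) :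
  is_density mu P -> is_density mu Q -> hockey mu Q P c \is a fin_num.
Proof.
move=> [mP P0 iP] [mQ Q0 iQ].
rewrite ge0_fin_numE ?hock_ge0 //.
apply: (@le_lt_trans _ _ 1%E); last exact: ltry.
rewrite -iQ; apply: ge0_le_integral => //.
- by move=> x _; rewrite lee_fin le_max lexx orbT.
- exact: mhock.
- by apply/measurable_EFinP.
move=> x _; rewrite lee_fin ge_max Q0 andbT lerBlDr lerDl.
by apply: mulr_ge0 => //; rewrite ltW // expR_gt0.
Qed.

Lemma hock_mono d (X : measurableType d) (R : realType)
  (mu : {measure set X -> \bar R}) (P Q : X -> R) (a b : R) :
  is_density mu P -> is_density mu Q -> a <= b ->
  (hockey mu Q P b <= hockey mu Q P a <= hockey mu Q P b + (expR b - expR a)%:E)%E.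
Proof.
move=> [mP P0 iP] [mQ Q0 iQ] ab.
have eab : expR a <= expR b by rewrite ler_expR.
have ea0 : 0 <= expR a by rewrite ltW // expR_gt0.
apply/andP; split.
  apply: ge0_le_integral => //.
  - by move=> x _; rewrite lee_fin le_max lexx orbT.
  - exact: mhock.
  - exact: mhock.
  move=> x _; rewrite lee_fin.
  have h2 : Q x - expR b * P x <= Q x - expR a * P x.
    by rewrite lerD2l lerN2; apply: ler_wpM2r.
  by rewrite ge_max !le_max h2 lexx !orbT.
rewrite /hockey.
have -> : (expR b - expR a)%:E = (\int[mu]_x ((expR b - expR a) * P x)%:E)%E.
  under eq_integral do rewrite EFinM.
  rewrite ge0_integralZl //.
  - by rewrite iP mule1.
  - by apply/measurable_EFinP.
  - by move=> x _; rewrite lee_fin.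
  by rewrite lee_fin subr_ge0.
rewrite -ge0_integralD //.
- apply: ge0_le_integral => //.
  + by move=> x _; rewrite lee_fin le_max lexx orbT.
  + exact: mhock.
  + apply: emeasurable_funD; first exact: mhock.
    apply/measurable_EFinP; apply: measurable_funM => //; exact: measurable_cst.
  move=> x _; rewrite -EFinD lee_fin ge_max; apply/andP; split.
    rewrite (_ : Q x - expR a * P x = Q x - expR b * P x + (expR b - expR a) * P x); last by ring.
    by rewrite lerD2r le_max lexx.
  by rewrite addr_ge0 // ?le_max ?lexx ?orbT // mulr_ge0 // subr_ge0.
- by move=> x _; rewrite lee_fin le_max lexx orbT.
- exact: mhock.
- by move=> x _; rewrite lee_fin mulr_ge0 // subr_ge0.
- apply/measurable_EFinP; apply: measurable_funM => //; exact: measurable_cst.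
Qed.

Lemma hock_sym d (X : measurableType d) (R : realType)
  (mu : {measure set X -> \bar R}) (P Q : X -> R) :
  is_density mu P -> is_density mu Q -> hockey mu Q P 0 = hockey mu P Q 0.
Proof.
move=> [mP P0 iP] [mQ Q0 iQ].
have : (hockey mu Q P 0 + 1 = hockey mu P Q 0 + 1)%E.
  rewrite -[X in (_ + X)%E = _]iP -[X in _ = (_ + X)%E]iQ /hockey.
  rewrite -!ge0_integralD //; first last.
  - by apply/measurable_EFinP.
  - by move=> x _; rewrite lee_fin.
  - exact: mhock.
  - by move=> x _; rewrite lee_fin le_max lexx orbT.
  - by apply/measurable_EFinP.
  - by move=> x _; rewrite lee_fin.
  - exact: mhock.
  - by move=> x _; rewrite lee_fin le_max lexx orbT.
  apply: eq_integral => x _; rewrite -!EFinD expR0 !mul1r; congr (_%:E).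
  by case: (lerP (Q x - P x) 0) => h1; case: (lerP (P x - Q x) 0) => h2;
    rewrite ?(max_l h1) ?(max_r (ltW h1)) ?(max_l h2) ?(max_r (ltW h2)) ?(max_r h1) ?(max_r h2); lra.
by move/(congr1 (fun z => z - 1%E)%E); rewrite !addeK.
Qed.

Lemma Glip d (X : measurableType d) (R : realType)
  (mu : {measure set X -> \bar R}) (P Q : X -> R) (a b : R) :
  is_density mu P -> is_density mu Q ->
  `|fine (hockey mu Q P a) - fine (hockey mu Q P b)| <= `|expR a - expR b|.
Proof.
move=> dP dQ.
wlog ab : a b / a <= b.
  move=> H; case: (leP a b) => h; first exact: H.
  by rewrite distrC [X in _ <= X]distrC; apply: H; apply: ltW.
have := @hock_mono _ _ _ mu P Q a b dP dQ ab.
rewrite -(fineK (@hock_fin _ _ _ mu P Q a dP dQ)) -(fineK (@hock_fin _ _ _ mu P Q b dP dQ)) -EFinD !lee_fin.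
move=> /andP[h1 h2].
have eab : expR a <= expR b by rewrite ler_expR.
rewrite ger0_norm ?subr_ge0 // ler0_norm ?subr_le0 //; lra.
Qed.

Definition Gf d (X : measurableType d) (R : realType)
  (mu : {measure set X -> \bar R}) (P Q : X -> R) (e : R) : R := fine (hockey mu Q P e).

Lemma Gcont d (X : measurableType d) (R : realType)
  (mu : {measure set X -> \bar R}) (P Q : X -> R) :
  is_density mu P -> is_density mu Q ->
  continuous (@Gf _ _ _ mu P Q).
Proof.
move=> dP dQ x; apply/cvgrPdist_le => e e0.
have /cvgrPdist_le /(_ e e0) := @continuous_expR R x.
apply: filterS => y hy; apply: le_trans hy; exact: Glip.
Qed.

Theorem lemmaB1 (d : measure_display) (X : measurableType d) (R : realType)
  (mu : {measure set X -> \bar R}) (P Q : X -> R) (eps : R) :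
  is_density mu P -> is_density mu Q -> 0 < eps ->
  let tau := Order.max (hockey mu P Q eps) (hockey mu Q P eps) in
  tau = hockey mu P Q eps ->
  exists eps' : R, 0 <= eps' <= eps /\ tau = hockey mu Q P eps'.
Proof.
move=> dP dQ eps0 tau htau.
have tfin : tau \is a fin_num by rewrite htau; exact: hock_fin.
have t1 : (tau <= hockey mu Q P 0)%E.
  rewrite htau (@hock_sym _ _ _ mu P Q dP dQ).
  by case/andP: (@hock_mono _ _ _ mu Q P 0 eps dQ dP (ltW eps0)).
have t2 : (hockey mu Q P eps <= tau)%E by rewrite /tau le_max lexx orbT.
have g1 : fine tau <= @Gf _ _ _ mu P Q 0 by rewrite /Gf fine_le // hock_fin.
have g2 : @Gf _ _ _ mu P Q eps <= fine tau by rewrite /Gf fine_le // hock_fin.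
have [c cI Gc] : exists2 c, c \in `[0, eps] & @Gf _ _ _ mu P Q c = fine tau.
  apply: IVT; first exact: ltW.
    exact/continuous_subspaceT/Gcont.
  rewrite ge_min le_max g1 g2 !orbT //.
exists c; split.
  by move: cI; rewrite in_itv.
by rewrite -(fineK tfin) -Gc /Gf fineK // hock_fin.
Qed.
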